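(* Let $M\in\{0,1\}^{m\times n}$ with $m,n$ even. Then there exist $X_0\subset[m]$ and $Y_0\subset[n]$ with $|X_0|=m/2$ and $|Y_0|=n/2$ such that $$\operatorname{disc}(X_0,Y_0)\leq -\operatorname{disc}^{-}(M)/12.$$
   Context: For $M\in\{0,1\}^{m\times n}$, $|M|$ is the number of $1$ entries, $p=|M|/(mn)$, and for $X\subset[m]$, $Y\subset[n]$, $\operatorname{disc}(X,Y)=|M[X\times Y]|-p|X||Y|$, where $|M[X\times Y]|$ is the number of $1$ entries of the submatrix with rows $X$ and columns $Y$. The negative discrepancy is $\operatorname{disc}^{-}(M)=\max_{X\subset[m],Y\subset[n]}(-\operatorname{disc}(X,Y))$. *)

(* Defs.v *)
From mathcomp Require Import all_boot all_order all_algebra.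
Set Implicit Arguments. Unset Strict Implicit. Unset Printing Implicit Defensive.
Import Order.TTheory GRing.Theory Num.Theory.
Local Open Scope ring_scope.

Definition ones (m n : nat) (M : 'M[bool]_(m, n)) (X : {set 'I_m}) (Y : {set 'I_n}) : nat :=
  #|[set ij : 'I_m * 'I_n | [&& ij.1 \in X, ij.2 \in Y & M ij.1 ij.2]]|.

Definition density (m n : nat) (M : 'M[bool]_(m, n)) : rat :=
  (ones M setT setT)%:R / (m * n)%:R.

Definition disc (m n : nat) (M : 'M[bool]_(m, n)) (X : {set 'I_m}) (Y : {set 'I_n}) : rat :=
  (ones M X Y)%:R - density M * #|X|%:R * #|Y|%:R.

Definition disc_neg (m n : nat) (M : 'M[bool]_(m, n)) : rat :=
  \big[Order.max/0]_(XY : {set 'I_m} * {set 'I_n}) (- disc M XY.1 XY.2).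

(* Main.v *)
Require Import Defs.
From mathcomp Require Import all_boot all_order all_algebra.
From mathcomp Require Import ring lra zify.
Import Order.TTheory GRing.Theory Num.Theory.
Local Open Scope ring_scope.

Lemma sumC_split (T : finType) (g : T -> rat) (X : {set T}) :
  \sum_(i in X) g i + \sum_(i in ~: X) g i = \sum_i g i.
Proof.
have -> : \sum_i g i = \sum_(i in [set: T]) g i.
  by apply: eq_bigl => i; rewrite in_setT.
by rewrite [in RHS](big_setID X) /= setTI setTD.
Qed.

Lemma L1 (T : finType) (g : T -> rat) k : forall (S : {set T}) (t : nat),
  #|S| = (t + k)%N -> exists2 Z : {set T}, Z \subset S &
   (#|Z| = t /\ #|S|%:R * \sum_(i in Z) g i <= t%:R * \sum_(i in S) g i).
Proof.
elim: k => [|k IH] S t hS.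
  exists S => //; split; first by rewrite hS addn0.
  by rewrite hS addn0.
case: t hS => [|t] hS.
  exists set0; first exact: sub0set.
  by rewrite cards0 big_set0 mulr0 mul0r.
have [a aS] : exists a, a \in S.
  apply/set0Pn; by rewrite -card_gt0 hS.
case: (arg_maxP g aS) => b bS0 bmax.
have bS : b \in S := bS0.
have hb : \sum_(i in S) g i <= #|S|%:R * g b.
  rewrite -sum1_card natr_sum mulr_suml.
  apply: ler_sum => i iS; rewrite mul1r; exact: bmax.
have hS' : #|S :\ b| = (t.+1 + k)%N.
  move: hS; rewrite (cardsD1 b) bS add1n addnS => -[->]; by [].
have [Z ZS [cZ hZ]] := IH _ _ hS'.
exists Z; first by apply: (subset_trans ZS); exact: subD1set.
split => //.
move: hZ hb; rewrite (big_setD1 _ bS) /= hS hS'.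
set gZ := \sum_(i in Z) g i; set gS := \sum_(i in S :\ b) g i.
rewrite -(addn1 k) !natrD.
have hu : (1:rat) <= t.+1%:R by rewrite ler1n.
have hk : (0:rat) <= k%:R by [].
move: (t.+1%:R) (k%:R) hu hk => u K hu hK h1 h2.
have e1 : (u + K + 1) * ((u + K) * gZ) <= (u + K + 1) * (u * gS).
  by apply: ler_wpM2l => //; lra.
have e2 : u * (g b + gS) <= u * ((u + K + 1) * g b).
  by apply: ler_wpM2l => //; lra.
have e3 : (u + K) * ((u + K + 1) * gZ) <= (u + K) * (u * (g b + gS)).
  nra.
rewrite -subr_ge0; rewrite -subr_ge0 in e3.
have e4 : (u + K) * (u * (g b + gS) - (u + K + 1) * gZ) = (u + K) * (u * (g b + gS)) - (u + K) * ((u + K + 1) * gZ) by ring.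
rewrite -e4 in e3.
rewrite pmulr_rge0 in e3 => //; lra.
Qed.

Lemma halve (T : finType) (g : T -> rat) (h : nat) (S : {set T}) (c' : rat) :
  #|T| = (h + h)%N -> \sum_(i in S) g i <= 0 -> 0 <= c' -> \sum_i g i <= c' ->
  exists Z : {set T}, #|Z| = h /\ \sum_(i in Z) g i <= (\sum_(i in S) g i)/2 + c'/2.
Proof.
move=> hT hs hc hcc.
have hST : (#|S| <= h + h)%N by rewrite -hT max_card.
case: (leqP h #|S|) => hSh.
  have [Z ZS [cZ hZ]] := @L1 _ g _ S h (esym (subnKC hSh)).
  exists Z; split => //.
  case: (posnP #|S|) => S0.
    have SE := cards0_eq S0.
    have ZE : Z = set0 by apply/eqP; rewrite -subset0 -SE.
    by rewrite ZE SE !big_set0; lra.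
  have hN : (0:rat) < #|S|%:R by rewrite ltr0n.
  have hN2 : #|S|%:R <= (h + h)%:R :> rat by rewrite ler_nat.
  rewrite natrD in hN2.
  move: hZ hN hN2; set gZ := \sum_(i in Z) g i; set s := \sum_(i in S) g i.
  move: (#|S|%:R) (h%:R) => N H hZ hN hN2.
  have e0 : (H + H - N) * s <= 0.
    apply: mulr_ge0_le0; [lra|exact: hs].
  move: hs e0; rewrite -/s => hs e0.
  have e : N * (2 * gZ - s) <= 0 by nra.
  rewrite pmulr_rle0 // in e; lra.
have hC : #|~: S| = ((h - #|S|) + (h + h - #|S| - (h - #|S|)))%N.
  have := cardsC S; rewrite hT; lia.
have [W WS [cW hW]] := @L1 _ g _ _ _ hC.
have SW : S :&: W = set0.
  apply/setP => i; rewrite !inE.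
  case iS: (i \in S) => //=; apply/negP => iW.
  by move/subsetP: WS => /(_ _ iW); rewrite inE iS.
exists (S :|: W); split.
  rewrite cardsU SW cards0 cW; lia.
have -> : \sum_(i in S :|: W) g i = \sum_(i in S) g i + \sum_(i in W) g i.
  rewrite (big_setID S) /=; congr (_ + _); apply: eq_bigl => i; rewrite !inE.
    by case: (i \in S); rewrite ?andbT ?andbF ?orbF.
  case iS: (i \in S) => //=.
  apply/esym/negbTE/negP => iW; move/setP: SW => /(_ i); by rewrite !inE iS iW.
have hsum := @sumC_split _ g S.
move: hW; rewrite hC.
have hN : (0:rat) < (h - #|S|)%:R by rewrite ltr0n subn_gt0.
have hN2 : (h + h - #|S| - (h - #|S|))%:R >= (h - #|S|)%:R :> rat.
  rewrite ler_nat; lia.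
rewrite natrD.
move: hs hsum hcc hN hN2; set gW := \sum_(i in W) g i; set s := \sum_(i in S) g i.
set gC := \sum_(i in ~: S) g i; set c := \sum_i g i.
move: ((h - #|S|)%:R) ((h + h - #|S| - (h - #|S|))%:R) => A B hs hsum hcc hA hB hW.
have e : (A + B) * (2 * gW - (c' - s)) <= 0.
  case: (lerP 0 gC) => hg.
    have : 0 <= (B - A) * gC by apply: mulr_ge0 => //; lra.
    have : 0 <= (A + B) * (c' - s) - (A + B) * gC.
      rewrite -mulrBr; apply: mulr_ge0; lra.
    nra.
  have t1 : A * gC <= 0 by rewrite pmulr_rle0 //; lra.
  have t2 : 0 <= (A + B) * (c' - s) by apply: mulr_ge0; lra.
  nra.
rewrite pmulr_rle0 in e; lra.
Qed.

Lemma sumT (T : finType) (g : T -> rat) :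
  \sum_(i in [set: T]) g i = \sum_i g i.
Proof. by apply: eq_bigl => i; rewrite in_setT. Qed.

Section Main.
Variables (I J : finType) (a : I -> J -> rat).

Definition F (X : {set I}) (Y : {set J}) := \sum_(i in X) \sum_(j in Y) a i j.

Lemma FC1 X Y : F X Y + F (~: X) Y = F setT Y.
Proof. by rewrite /F sumC_split sumT. Qed.

Lemma FC2 X Y : F X Y + F X (~: Y) = F X setT.
Proof.
rewrite /F -big_split /=; apply: eq_bigr => i _.
by rewrite sumC_split sumT.
Qed.

Lemma Fex X Y : F X Y = \sum_(j in Y) \sum_(i in X) a i j.
Proof. by rewrite /F exchange_big. Qed.

Lemma exhalf (T : finType) h : #|T| = (h + h)%N -> exists Z : {set T}, #|Z| = h.
Proof.
move=> hT.
have e1 : \sum_(i in (set0 : {set T})) (0:rat) <= 0 by rewrite big_set0.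
have e2 : \sum_(i : T) (0:rat) <= 0 by rewrite big1.
have [Z [cZ _]] := @halve T (fun _ => 0) h set0 0 hT e1 (lexx _) e2.
by exists Z.
Qed.

Lemma cardC_half (T : finType) h (Z : {set T}) : #|T| = (h + h)%N -> #|Z| = h -> #|~: Z| = h.
Proof. move=> hT hZ; have := cardsC Z; rewrite hT hZ; lia. Qed.

Variables (hm hn : nat) (hI : #|I| = (hm + hm)%N) (hJ : #|J| = (hn + hn)%N).
Hypothesis h0 : F setT setT = 0.

Lemma mainF X Y : 0 <= - F X Y -> exists (X0 : {set I}) (Y0 : {set J}),
  [/\ #|X0| = hm, #|Y0| = hn & F X0 Y0 <= - (- F X Y) / 12].
Proof.
set D := - F X Y => hD.
have hDe : F X Y = - D by rewrite /D opprK.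
have pickR : forall Y1 : {set J}, #|Y1| = hn -> F setT Y1 <= - D / 6 -> exists (X0 : {set I}) (Y0 : {set J}),
    [/\ #|X0| = hm, #|Y0| = hn & F X0 Y0 <= - D / 12].
  move=> Y1 cY1 hY1; have [X' cX'] := @exhalf _ _ hI.
  have := FC1 X' Y1.
  case: (lerP (F X' Y1) (- D / 12)) => h1 h2.
    by exists X', Y1.
  exists (~: X'), Y1; split => //; first exact: cardC_half.
  lra.
have pickC : forall X1 : {set I}, #|X1| = hm -> F X1 setT <= - D / 6 -> exists (X0 : {set I}) (Y0 : {set J}),
    [/\ #|X0| = hm, #|Y0| = hn & F X0 Y0 <= - D / 12].
  move=> X1 cX1 hX1; have [Y' cY'] := @exhalf _ _ hJ.
  have := FC2 X1 Y'.
  case: (lerP (F X1 Y') (- D / 12)) => h1 h2.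
    by exists X1, Y'.
  exists X1, (~: Y'); split => //; first exact: cardC_half.
  lra.
set c := F setT Y.
case: (lerP (D / 3) c) => hc.
  have e1 : \sum_(j in ~: Y) \sum_(i in [set: I]) a i j <= 0.
    rewrite -Fex; have := FC2 setT Y; rewrite -/c h0; lra.
  have e2 : \sum_j \sum_(i in [set: I]) a i j <= 0.
    by rewrite -sumT -Fex h0.
  have [Y1 [cY1 hY1]] := @halve J (fun j => \sum_(i in [set: I]) a i j) hn (~: Y) 0 hJ e1 (lexx _) e2.
  have hY1' : F setT Y1 <= F setT (~: Y) / 2 by rewrite !Fex; lra.
  apply: (pickR Y1 cY1).
  have := FC2 setT Y; rewrite -/c h0; lra.
have e1 : \sum_(i in X) \sum_(j in Y) a i j <= 0 by rewrite -/(F X Y) -oppr_ge0; exact: hD.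
have e2 : \sum_i \sum_(j in Y) a i j <= D / 3.
  have -> : \sum_i \sum_(j in Y) a i j = c by rewrite /c /F sumT.
  lra.
have hD3 : 0 <= D / 3 by lra.
have [X1 [cX1 hX1]] := @halve I (fun i => \sum_(j in Y) a i j) hm X (D / 3) hI e1 hD3 e2.
move: hX1; rewrite -/(F X1 Y) -/(F X Y) => hX1.
case: (lerP (D / 6) (F X1 setT)) => hr.
  apply: (pickC (~: X1) (@cardC_half _ _ _ hI cX1)).
  have := FC1 X1 setT; rewrite h0; lra.
have f1 : \sum_(j in Y) \sum_(i in X1) a i j <= 0 by rewrite -Fex; lra.
have f2 : \sum_j \sum_(i in X1) a i j <= D / 6 by rewrite -sumT -Fex; lra.
have hD6 : 0 <= D / 6 by lra.
have [Y1 [cY1 hY1]] := @halve J (fun j => \sum_(i in X1) a i j) hn Y (D / 6) hJ f1 hD6 f2.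
exists X1, Y1; split => //.
move: hY1; rewrite -!Fex; lra.
Qed.
End Main.
Arguments F {I J}.

Lemma ones_sum (m n : nat) (M : 'M[bool]_(m, n)) X Y :
  (ones M X Y)%:R = \sum_(i in X) \sum_(j in Y) ((M i j : nat)%:R : rat).
Proof.
rewrite /ones -sum1_card.
have -> : (\sum_(ij in [set ij : 'I_m * 'I_n | [&& ij.1 \in X, ij.2 \in Y & M ij.1 ij.2]]) 1
   = \sum_(p | (p.1 \in X) && (p.2 \in Y)) (M p.1 p.2 : nat))%N.
  rewrite big_mkcond [RHS]big_mkcond; apply: eq_bigr => p _; rewrite inE.
  by case: (p.1 \in X); case: (p.2 \in Y); case: (M p.1 p.2).
rewrite -(@pair_big _ _ _ _ _ (fun i => i \in X) (fun j => j \in Y) (fun i j => (M i j : nat))) /= natr_sum; apply: eq_bigr => i _; by rewrite natr_sum.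
Qed.

Lemma disc_F (m n : nat) (M : 'M[bool]_(m, n)) X Y :
  disc M X Y = F (fun i j => (M i j : nat)%:R - density M) X Y.
Proof.
rewrite /disc /F ones_sum.
have e : forall i, \sum_(j in Y) (((M i j : nat)%:R : rat) - density M)
   = \sum_(j in Y) ((M i j : nat)%:R : rat) - density M *+ #|Y|.
  move=> i; rewrite sumrB sumr_const; congr (_ - _).
rewrite [RHS](eq_bigr _ (fun i _ => e i)).
rewrite [RHS]sumrB [in RHS]sumr_const.
congr (_ - _).
by rewrite !mulr_natr mulrnAC.
Qed.

Theorem claim2p2 (m n : nat) (M : 'M[bool]_(m, n)) :
  ~~ odd m -> ~~ odd n ->
  exists (X0 : {set 'I_m}) (Y0 : {set 'I_n}),
    [/\ #|X0| = m./2, #|Y0| = n./2 & disc M X0 Y0 <= - disc_neg M / 12].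
Proof.
move=> om on.
have hI : #|'I_m| = (m./2 + m./2)%N.
  by rewrite card_ord addnn halfK (negbTE om) subn0.
have hJ : #|'I_n| = (n./2 + n./2)%N.
  by rewrite card_ord addnn halfK (negbTE on) subn0.
set a := fun (i : 'I_m) (j : 'I_n) => ((M i j : nat)%:R : rat) - density M.
have h0 : F a setT setT = 0.
  rewrite /a -disc_F /disc /density !cardsT !card_ord.
  case: (posnP (m * n)) => mn.
    have o0 : ones M setT setT = 0%N.
      apply/eqP; rewrite -leqn0 -mn.
      rewrite /ones; apply: leq_trans (max_card _) _.
      by rewrite card_prod !card_ord.
    rewrite o0 !mul0r; exact: subrr.
  have mn' : ((m * n)%:R : rat) != 0 by rewrite pnatr_eq0 -lt0n.
  rewrite -mulrA -natrM mulfVK //; apply/eqP; rewrite subr_eq0; apply/eqP; reflexivity.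
have P0 : exists (X0 : {set 'I_m}) (Y0 : {set 'I_n}),
    [/\ #|X0| = m./2, #|Y0| = n./2 & disc M X0 Y0 <= - 0 / 12].
  have hF : F a set0 setT = 0 by rewrite /F big_set0.
  have hD0 : 0 <= - F a set0 setT by rewrite hF oppr0.
  have [X0 [Y0 [c1 c2 h]]] := @mainF _ _ a _ _ hI hJ h0 set0 setT hD0.
  exists X0, Y0; split => //; by rewrite disc_F -/a; move: h; rewrite hF.
rewrite /disc_neg.
apply: (big_ind (fun d => exists (X0 : {set 'I_m}) (Y0 : {set 'I_n}),
    [/\ #|X0| = m./2, #|Y0| = n./2 & disc M X0 Y0 <= - d / 12])) => //.
  move=> x y Px Py; rewrite /Order.max; by case: ifP.
move=> [X Y] _ /=.
case: (lerP 0 (- disc M X Y)) => hd.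
  have hd' : 0 <= - F a X Y by rewrite -disc_F.
  have [X0 [Y0 [c1 c2 h]]] := @mainF _ _ a _ _ hI hJ h0 X Y hd'.
  exists X0, Y0; split => //; rewrite !disc_F; exact: h.
have [X0 [Y0 [c1 c2 h]]] := P0.
exists X0, Y0; split => //; lra.
Qed.
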